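(* Let $\varepsilon\in(0,0.1]$ and $0<\ell\le r$. The number $R$ of while-loop iterations executed by Algorithm U on input $(\ell,r,\delta,\varepsilon,\gamma)$ satisfies $$R\ \le\ \widetilde R:=22\log^2(r/\ell)+44\log(r/\ell)\log(1/\varepsilon)+66\log(1/\varepsilon).$$
   Context: Logarithms are natural. Algorithm U (input $\ell,r,\delta,\varepsilon,\gamma$; absolute constant $C$; pricing query at $p$ reveals only $\mathbf 1\{v\ge p\}$ for a fresh $v$ from the unknown distribution): Let $S_1=\{(1+\varepsilon)^k\ell: k\in\mathbb{N}_0,\ (1+\varepsilon)^k\ell\le r\}$, $S_{can}=\emptyset$, $i=1$. While $|S_i|\ge 20$: let $\ell_i=\min S_i$, $r_i=\max S_i$, $a_i=\min\{p\in S_i: p>\ell_i+0.2(r_i-\ell_i)\}$, $b_i=\min\{p\in S_i:p>\ell_i+0.5(r_i-\ell_i)\}$. Post $b_i$ for $C\log(\widetilde R/\delta)\gamma^{-1}$ queries and let $\widehat q(b_i)$ be the empirical purchase fraction. If $\widehat q(b_i)<0.75\gamma$, set $S_{i+1}=S_i\cap[\ell_i,b_i]$, $i\leftarrow i+1$, continue. Otherwise add $a_i,b_i$ to $S_{can}$; for $p\in\{a_i,b_i\}$ post $p$ for $C\log(\widetilde R/\delta)\gamma^{-1}\varepsilon^{-2}$ queries and set $\widehat{\mathrm{Rev}}(p)=p\cdot$(empirical purchase fraction). If $(1+\varepsilon)\widehat{\mathrm{Rev}}(a_i)<(1-\varepsilon)\widehat{\mathrm{Rev}}(b_i)$ set $S_{i+1}=S_i\cap[a_i,r_i]$,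 else $S_{i+1}=S_i\cap[\ell_i,b_i]$; $i\leftarrow i+1$. After the loop $R=i-1$, all of $S_{R+1}$ is added to $S_{can}$, revenues of $S_{can}$ are re-estimated with $C\log(\widetilde R/\delta)\gamma^{-1}\varepsilon^{-2}$ queries each, and the empirical maximizer is output. *)

(* Defs.v *)
From Stdlib Require Import Reals Lra List ZArith.
Open Scope R_scope.

Definition Rleb (x y : R) : bool := if Rle_dec x y then true else false.
Definition Rltb (x y : R) : bool := if Rlt_dec x y then true else false.

(* Enough exponents: every k with (1+eps)^k * l <= r satisfies
   k <= ln(r/l)/ln(1+eps) < grid_bound. *)
Definition grid_bound (l r eps : R) : nat :=
  S (Z.to_nat (up (ln (r / l) / ln (1 + eps)))).

Definition grid (l r eps : R) : list R :=
  filter (fun x => Rleb x r)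
         (map (fun k => (1 + eps) ^ k * l) (seq 0 (grid_bound l r eps))).

Definition lmin (s : list R) : R :=
  match s with nil => 0 | x :: t => fold_left Rmin t x end.
Definition lmax (s : list R) : R :=
  match s with nil => 0 | x :: t => fold_left Rmax t x end.

Definition restrict (s : list R) (x y : R) : list R :=
  filter (fun p => andb (Rleb x p) (Rleb p y)) s.

Definition ell_i (s : list R) : R := lmin s.
Definition r_i (s : list R) : R := lmax s.
Definition a_i (s : list R) : R :=
  lmin (filter (fun p => Rltb (ell_i s + 0.2 * (r_i s - ell_i s)) p) s).
Definition b_i (s : list R) : R :=
  lmin (filter (fun p => Rltb (ell_i s + 0.5 * (r_i s - ell_i s)) p) s).

(* One while-loop iteration. Whatever the (random) test outcomes, the new
   set is either S ∩ [a_i, r_i] (c = true) or S ∩ [l_i, b_i] (c = false). *)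
Definition step (c : bool) (s : list R) : list R :=
  if c then restrict s (a_i s) (r_i s) else restrict s (ell_i s) (b_i s).

(* S_seq ch i = S_{i+1} for the run of the loop along outcome sequence ch;
   once |S| < 20 the loop has stopped and the set is frozen. *)
Fixpoint S_seq (l r eps : R) (ch : nat -> bool) (i : nat) : list R :=
  match i with
  | O => grid l r eps
  | S j => let s := S_seq l r eps ch j in
           if (20 <=? length s)%nat then step (ch j) s else s
  end.

Definition Rtilde (l r eps : R) : R :=
  22 * (ln (r / l)) ^ 2 + 44 * ln (r / l) * ln (1 / eps) + 66 * ln (1 / eps).

(* Main.v *)
Require Import Defs.
From Stdlib Require Import Reals.
From Stdlib Require Import Lra Lia List ZArith Psatz.
Open Scope R_scope.

Lemma Rleb_iff a b : Rleb a b = true <-> a <= b.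
Proof. unfold Rleb; destruct (Rle_dec a b); split; intros; auto; try discriminate; lra. Qed.
Lemma Rltb_iff a b : Rltb a b = true <-> a < b.
Proof. unfold Rltb; destruct (Rlt_dec a b); split; intros; auto; try discriminate; lra. Qed.

Lemma fold_min_prop t acc : fold_left Rmin t acc <= acc /\ forall p, In p t -> fold_left Rmin t acc <= p.
Proof.
  revert acc; induction t as [|y t IH]; intros acc; simpl.
  - split; [lra| tauto].
  - destruct (IH (Rmin acc y)) as [H1 H2]. split.
    + pose proof (Rmin_l acc y); lra.
    + intros p [<-|Hp]; [pose proof (Rmin_r acc y); lra | auto].
Qed.
Lemma fold_max_prop t acc : acc <= fold_left Rmax t acc /\ forall p, In p t -> p <= fold_left Rmax t acc.
Proof.
  revert acc; induction t as [|y t IH]; intros acc; simpl.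
  - split; [lra| tauto].
  - destruct (IH (Rmax acc y)) as [H1 H2]. split.
    + pose proof (Rmax_l acc y); lra.
    + intros p [<-|Hp]; [pose proof (Rmax_r acc y); lra | auto].
Qed.
Lemma fold_min_in t acc : In (fold_left Rmin t acc) (acc :: t).
Proof.
  revert acc; induction t as [|y t IH]; intros acc; simpl; [auto|].
  assert (Rmin acc y = acc \/ Rmin acc y = y) as Hc by (unfold Rmin; destruct (Rle_dec acc y); auto).
  destruct (IH (Rmin acc y)) as [H|H].
  - rewrite <- H. destruct Hc as [-> | ->]; auto.
  - auto.
Qed.
Lemma fold_max_in t acc : In (fold_left Rmax t acc) (acc :: t).
Proof.
  revert acc; induction t as [|y t IH]; intros acc; simpl; [auto|].
  assert (Rmax acc y = acc \/ Rmax acc y = y) as Hc by (unfold Rmax; destruct (Rle_dec acc y); auto).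
  destruct (IH (Rmax acc y)) as [H|H].
  - rewrite <- H. destruct Hc as [-> | ->]; auto.
  - auto.
Qed.

Lemma lmin_le s p : In p s -> lmin s <= p.
Proof.
  destruct s as [|y t]; simpl; [tauto|]. destruct (fold_min_prop t y) as [H1 H2].
  intros [<-|H]; auto.
Qed.
Lemma lmax_le s p : In p s -> p <= lmax s.
Proof.
  destruct s as [|y t]; simpl; [tauto|]. destruct (fold_max_prop t y) as [H1 H2].
  intros [<-|H]; auto.
Qed.
Lemma lmin_in s : s <> nil -> In (lmin s) s.
Proof. destruct s as [|y t]; [tauto|]. intros _. apply fold_min_in. Qed.
Lemma lmax_in s : s <> nil -> In (lmax s) s.
Proof. destruct s as [|y t]; [tauto|]. intros _. apply fold_max_in. Qed.

Lemma bern n e : 0 <= e -> 1 + INR n * e <= (1+e)^n.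
Proof.
  intros He; induction n; [simpl; lra|].
  rewrite S_INR. change ((1+e)^(S n)) with ((1+e)*(1+e)^n).
  pose proof (pos_INR n). nra.
Qed.

Lemma ln_le' x y : 0 < x -> x <= y -> ln x <= ln y.
Proof. intros Hx Hxy. destruct (Req_dec x y) as [->|H]; [lra|].
  left. apply ln_increasing; lra. Qed.
Lemma exp_le' x y : x <= y -> exp x <= exp y.
Proof. intros Hxy. destruct (Req_dec x y) as [->|H]; [lra|].
  left. apply exp_increasing; lra. Qed.

Section Main.
Variables (l r eps : R) (ch : nat -> bool).
Hypothesis Heps : 0 < eps.
Hypothesis Heps1 : eps <= 0.1.
Hypothesis Hl : 0 < l.

Definition f (k : nat) : R := (1 + eps) ^ k * l.
Definition G0 : list R := map f (seq 0 (grid_bound l r eps)).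

Lemma f_pos k : 0 < f k.
Proof. unfold f. apply Rmult_lt_0_compat; auto. apply pow_lt; lra. Qed.
Lemma f_ge k : l <= f k.
Proof. unfold f. pose proof (pow_R1_Rle (1+eps) k ltac:(lra)). nra. Qed.
Lemma f_lt k j : (k < j)%nat -> f k < f j.
Proof. intros H. unfold f. apply Rmult_lt_compat_r; auto. apply Rlt_pow; auto; lra. Qed.
Lemma f_le k j : (k <= j)%nat -> f k <= f j.
Proof. intros H. destruct (Nat.eq_dec k j) as [->|]; [lra|]. left; apply f_lt; lia. Qed.
Lemma f_S k : f (S k) = (1 + eps) * f k.
Proof. unfold f; simpl; ring. Qed.
Lemma f_add19 k : f (k + 19) = (1+eps)^19 * f k.
Proof. unfold f. rewrite pow_add. ring. Qed.

Lemma G0_pos p : In p G0 -> 0 < p.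
Proof. unfold G0; intros H; apply in_map_iff in H as [k [<- _]]; apply f_pos. Qed.
Lemma G0_ge p : In p G0 -> l <= p.
Proof. unfold G0; intros H; apply in_map_iff in H as [k [<- _]]; apply f_ge. Qed.

Definition Good (S : list R) : Prop :=
  NoDup S /\ incl S G0 /\ (forall p, In p G0 -> lmin S <= p <= lmax S -> In p S).

Lemma restrict_mem S a b q : In q (restrict S a b) <-> In q S /\ a <= q <= b.
Proof. unfold restrict. rewrite filter_In, Bool.andb_true_iff, !Rleb_iff. tauto. Qed.

Lemma restrict_bounds S a b : restrict S a b <> nil ->
  a <= lmin (restrict S a b) /\ lmax (restrict S a b) <= b.
Proof.
  intros Hne. pose proof (lmin_in _ Hne) as H1. pose proof (lmax_in _ Hne) as H2.
  apply restrict_mem in H1. apply restrict_mem in H2. lra.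
Qed.

Lemma restrict_good S a b : Good S -> Good (restrict S a b).
Proof.
  intros [Hnd [Hinc Hc]]. split; [apply NoDup_filter; auto|]. split.
  - intros p Hp. apply restrict_mem in Hp. apply Hinc; tauto.
  - intros p HpG Hb.
    assert (Hne : restrict S a b <> nil).
    { intro E. rewrite E in Hb. simpl in Hb. pose proof (G0_pos p HpG). lra. }
    pose proof (lmin_in _ Hne) as H1. pose proof (lmax_in _ Hne) as H2.
    apply restrict_mem in H1. apply restrict_mem in H2.
    pose proof (lmin_le S _ (proj1 H1)). pose proof (lmax_le S _ (proj1 H2)).
    apply restrict_mem. split; [apply Hc; auto; lra| lra].
Qed.

Lemma grid_good : Good (grid l r eps).
Proof.
  assert (HG : grid l r eps = filter (fun x => Rleb x r) G0) by reflexivity.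
  rewrite HG. split; [|split].
  - apply NoDup_filter. unfold G0. apply NoDup_map_NoDup_ForallPairs; [|apply seq_NoDup].
    intros k j _ _ E. destruct (Nat.lt_trichotomy k j) as [H|[H|H]]; auto;
      apply f_lt in H; lra.
  - intros p Hp. apply filter_In in Hp; tauto.
  - intros p HpG Hb.
    assert (Hne : filter (fun x => Rleb x r) G0 <> nil).
    { intro E. rewrite E in Hb. simpl in Hb. pose proof (G0_pos p HpG). lra. }
    pose proof (lmax_in _ Hne) as H2. apply filter_In in H2 as [_ H2].
    apply Rleb_iff in H2. apply filter_In. split; auto. apply Rleb_iff. lra.
Qed.

Lemma S_seq_S n : S_seq l r eps ch (S n) =
  (if (20 <=? length (S_seq l r eps ch n))%nat then step (ch n) (S_seq l r eps ch n)
   else S_seq l r eps ch n).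
Proof. reflexivity. Qed.

Lemma S_seq_good n : Good (S_seq l r eps ch n).
Proof.
  induction n; [apply grid_good|]. rewrite S_seq_S.
  destruct (20 <=? _)%nat; auto. unfold step. destruct (ch n); apply restrict_good; auto.
Qed.

Lemma wide S : Good S -> (20 <= length S)%nat -> (1+eps)^19 * lmin S <= lmax S.
Proof.
  intros [Hnd [Hinc Hc]] Hlen.
  destruct (Rle_lt_dec ((1+eps)^19 * lmin S) (lmax S)) as [H|H]; auto. exfalso.
  assert (Hne : S <> nil) by (intro E; rewrite E in Hlen; simpl in Hlen; lia).
  pose proof (Hinc _ (lmin_in S Hne)) as Hm. unfold G0 in Hm.
  apply in_map_iff in Hm as [a [Ha _]].
  assert (Hincl : incl S (map f (seq a 19))).
  { intros p Hp. pose proof (Hinc _ Hp) as Hp'. apply in_map_iff in Hp' as [k [Hk _]].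
    apply in_map_iff. exists k. split; auto. apply in_seq.
    pose proof (lmin_le S p Hp). pose proof (lmax_le S p Hp).
    split.
    - destruct (le_lt_dec a k) as [|Hka]; auto. pose proof (f_lt k a Hka). lra.
    - destruct (lt_dec k (a+19)) as [|Hk2]; [lia|]. exfalso.
      assert (Hf : f (a+19) <= f k) by (apply f_le; lia).
      rewrite f_add19, Ha in Hf. subst p. lra. }
  pose proof (NoDup_incl_length Hnd Hincl) as HL.
  rewrite length_map, length_seq in HL. lia.
Qed.

Lemma bern19 : 1 + 19 * eps <= (1+eps)^19.
Proof.
  pose proof (bern 19 eps ltac:(lra)). replace (INR 19) with 19 in H by (simpl; ring). auto.
Qed.

Lemma shrink S c : Good S -> (20 <= length S)%nat -> (20 <= length (step c S))%nat ->
  lmax (step c S) - lmin (step c S) <= 0.8 * (lmax S - lmin S).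
Proof.
  intros HG Hlen Hlen'.
  pose proof (wide S HG Hlen) as Hw. pose proof bern19 as Hb19.
  destruct HG as [Hnd [Hinc Hc]].
  assert (Hne : S <> nil) by (intro E; rewrite E in Hlen; simpl in Hlen; lia).
  assert (Hne' : step c S <> nil) by (intro E; rewrite E in Hlen'; simpl in Hlen'; lia).
  unfold step, a_i, b_i, r_i, ell_i in *.
  set (m := lmin S) in *. set (M := lmax S) in *.
  assert (Hm : In m S) by (apply lmin_in; auto).
  assert (HM : In M S) by (apply lmax_in; auto).
  assert (Hml : l <= m) by (apply G0_ge; apply Hinc; auto).
  assert (HW : 19 * eps * m <= M - m) by nra.
  assert (Hem : 0 < eps * m) by (apply Rmult_lt_0_compat; lra).
  destruct c.
  - apply restrict_bounds in Hne'.
    set (Fa := filter _ S) in *.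
    assert (HMF : In M Fa).
    { apply filter_In. split; auto. apply Rltb_iff. nra. }
    assert (HFne : Fa <> nil) by (intro E; rewrite E in HMF; inversion HMF).
    pose proof (lmin_in _ HFne) as Ha. apply filter_In in Ha as [_ Ha]. apply Rltb_iff in Ha.
    lra.
  - apply restrict_bounds in Hne'.
    set (Fb := filter _ S) in *.
    set (mid := m + 0.5 * (M - m)) in *.
    assert (HMF : In M Fb).
    { apply filter_In. split; auto. apply Rltb_iff. unfold mid. nra. }
    assert (HFne : Fb <> nil) by (intro E; rewrite E in HMF; inversion HMF).
    pose proof (lmin_in _ HFne) as Hb. set (b := lmin Fb) in *.
    apply filter_In in Hb as [HbS Hb]. apply Rltb_iff in Hb.
    assert (HbM : b <= M) by (apply lmax_le; auto).
    assert (Hbnd : b <= (1+eps) * m \/ b <= (1+eps) * mid).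
    { pose proof (Hinc _ HbS) as HbG. unfold G0 in HbG.
      apply in_map_iff in HbG as [k [Hk Hkin]]. apply in_seq in Hkin.
      destruct k as [|k'].
      - exfalso. unfold f in Hk. simpl in Hk. unfold mid in Hb. nra.
      - rewrite f_S in Hk.
        destruct (Rlt_le_dec (f k') m) as [Hq|Hq].
        + left. pose proof (f_pos k'). nra.
        + right. pose proof (f_lt k' (Nat.succ k') (Nat.lt_succ_diag_r k')) as Hlt.
          rewrite f_S in Hlt.
          assert (HqS : In (f k') S).
          { apply Hc.
            - unfold G0. apply in_map_iff. exists k'. split; auto. apply in_seq. lia.
            - lra. }
          destruct (Rle_lt_dec (f k') mid) as [Hq2|Hq2].
          * nra.
          * exfalso. assert (In (f k') Fb) as HF.
            { apply filter_In. split; auto. apply Rltb_iff. auto. }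
            pose proof (lmin_le Fb _ HF). fold b in H. lra. }
    assert (HepsW : eps * (M - m) <= 0.1 * (M - m)) by (apply Rmult_le_compat_r; lra).
    unfold mid in Hbnd. destruct Hbnd; nra.
Qed.

Definition W (S : list R) := lmax S - lmin S.

Lemma decay n : (20 <= length (S_seq l r eps ch n))%nat ->
  W (S_seq l r eps ch n) <= 0.8 ^ n * W (S_seq l r eps ch 0).
Proof.
  induction n; intros H.
  - simpl. lra.
  - rewrite S_seq_S in *. destruct (20 <=? length (S_seq l r eps ch n))%nat eqn:E.
    + apply Nat.leb_le in E. specialize (IHn E).
      pose proof (shrink _ (ch n) (S_seq_good n) E H). unfold W in *.
      simpl (0.8 ^ S n). nra.
    + apply Nat.leb_gt in E. lia.
Qed.

End Main.

Theorem lemma3p3 (l r eps : R) (ch : nat -> bool) :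
  0 < eps <= 0.1 -> 0 < l <= r ->
  exists n : nat, (length (S_seq l r eps ch n) < 20)%nat /\ INR n <= Rtilde l r eps.
Proof.
  intros [He He1] [Hl Hlr].
  set (L := ln (r / l)). set (E := ln (1 / eps)). set (c := ln 1.25).
  assert (HL : 0 <= L).
  { unfold L. rewrite <- ln_1. apply ln_le'; [lra|].
    apply (Rmult_le_reg_r l); auto. field_simplify; lra. }
  assert (HE : 1 <= E).
  { unfold E. assert (H1 : ln (exp 1) <= ln (1/eps)).
    { apply ln_le'; [apply exp_pos|].
      pose proof exp_le_3. apply (Rmult_le_reg_r eps); auto. field_simplify; nra. }
    rewrite ln_exp in H1. exact H1. }
  assert (Hc : 0.2 <= c).
  { unfold c. rewrite <- (ln_exp 0.2). apply ln_le'; [apply exp_pos|].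
    pose proof (exp_ineq1_le (-0.2)). pose proof (exp_plus 0.2 (-0.2)).
    replace (0.2 + -0.2) with 0 in H0 by lra. rewrite exp_0 in H0.
    pose proof (exp_pos 0.2). nra. }
  set (T := (L + E) / c).
  assert (HT : T * c = L + E) by (unfold T; field; lra).
  assert (HT0 : 0 <= T) by nra.
  destruct (archimed T) as [Hu1 Hu2].
  assert (Hz : (0 <= up T)%Z).
  { assert (-1 < IZR (up T)) by lra. apply lt_IZR in H. lia. }
  set (B := Z.to_nat (up T)).
  assert (HB : INR B = IZR (up T)).
  { unfold B. rewrite INR_IZR_INZ, Z2Nat.id; auto. }
  exists B. split.
  - destruct (lt_dec (length (S_seq l r eps ch B)) 20) as [|Hn]; auto. exfalso.
    assert (Hlen : (20 <= length (S_seq l r eps ch B))%nat) by lia.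
    pose proof (decay l r eps ch He He1 Hl B Hlen) as Hd.
    pose proof (wide l r eps He Hl _ (S_seq_good l r eps ch He Hl B) Hlen) as Hw.
    pose proof (bern19 eps He) as Hb.
    pose proof (S_seq_good l r eps ch He Hl B) as [_ [Hinc _]].
    assert (Hne : S_seq l r eps ch B <> nil) by (intro E0; rewrite E0 in Hlen; simpl in Hlen; lia).
    assert (Hml : l <= lmin (S_seq l r eps ch B)).
    { apply (G0_ge l r eps He Hl). apply Hinc. apply lmin_in; auto. }
    assert (HW0 : W (S_seq l r eps ch 0) <= r).
    { change (S_seq l r eps ch 0) with (grid l r eps). unfold W. pose proof (grid_good l r eps He Hl) as [_ [Hinc0 _]].
      assert (Hcase : grid l r eps = nil \/ grid l r eps <> nil).
      { destruct (grid l r eps); [left; reflexivity | right; discriminate]. }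
      destruct Hcase as [Eg|Hne0]; [rewrite Eg; simpl; lra|].
      pose proof (lmax_in _ Hne0) as H1. pose proof (lmin_in _ Hne0) as H2.
      pose proof (G0_pos l r eps He Hl _ (Hinc0 _ H2)).
      assert (Hr : Rleb (lmax (grid l r eps)) r = true)
        by (exact (proj2 (proj1 (filter_In _ _ _) H1))).
      apply Rleb_iff in Hr. lra. }
    assert (Hp : r * 0.8 ^ B <= eps * l).
    { assert (H08 : 0 < 0.8 ^ B) by (apply pow_lt; lra).
      rewrite <- (exp_ln (r * 0.8 ^ B)) by nra.
      rewrite <- (exp_ln (eps * l)) by nra.
      apply exp_le'. rewrite !ln_mult by lra. rewrite ln_pow by lra.
      assert (Hlc : ln 0.8 = - c).
      { unfold c. pose proof (ln_mult 0.8 1.25 ltac:(lra) ltac:(lra)).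
        replace (0.8 * 1.25) with 1 in H by lra. rewrite ln_1 in H. lra. }
      rewrite Hlc.
      assert (HL' : L = ln r - ln l).
      { unfold L. unfold Rdiv. rewrite ln_mult, ln_Rinv; lra || (apply Rinv_0_lt_compat; lra). }
      assert (HE' : E = - ln eps).
      { unfold E. unfold Rdiv. rewrite Rmult_1_l, ln_Rinv; lra. }
      assert (T <= INR B) by lra. nra. }
    unfold W in Hd, HW0. pose proof (pow_lt 0.8 B ltac:(lra)). nra.
  - rewrite HB. unfold Rtilde. fold L. fold E.
    assert (T <= 5 * (L + E)) by nra. nra.
Qed.
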